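(* Let $C$ be a copula, and write $C_{2|1}(v|u)=\partial C(u,v)/\partial u$ and $C_{1|2}(u|v)=\partial C(u,v)/\partial v$. Provided the partial derivatives and limits appearing below exist, the following hold. For $p,q\in(0,1)$: $$\lambda^C(q|p)=\tfrac12\lim_{t\to0^+}\big[C_{2|1}(q+t|p+t)-C_{2|1}(q-t|p+t)+C_{2|1}(q+t|p-t)-C_{2|1}(q-t|p-t)+C_{1|2}(p+t|q+t)-C_{1|2}(p-t|q+t)+C_{1|2}(p+t|q-t)-C_{1|2}(p-t|q-t)\big].$$ For $p\in(0,1)$, $q=0$: $\lambda^C(0|p)=\tfrac12\lim_{t\to0^+}[C_{2|1}(t|p+t)+C_{2|1}(t|p-t)+C_{1|2}(p+t|t)-C_{1|2}(p-t|t)]$. For $p\in(0,1)$, $q=1$: $\lambda^C(1|p)=1-\tfrac12\lim_{t\to0^+}[C_{2|1}(1-t|p+t)+C_{2|1}(1-t|p-t)-C_{1|2}(p+t|1-t)+C_{1|2}(p-t|1-t)]$. For $p=0$, $q\in(0,1)$: $\lambda^C(q|0)=\lim_{t\to0^+}[C_{2|1}(q+t|t)-C_{2|1}(q-t|t)+C_{1|2}(t|q+t)+C_{1|2}(t|q-t)]$. For $p=1$, $q\in(0,1)$: $\lambda^C(q|1)=2-\lim_{t\to0^+}[C_{1|2}(1-t|q+t)+C_{1|2}(1-t|q-t)-C_{2|1}(q+t|1-t)+C_{2|1}(q-t|1-t)]$. For $p=0$, $q=1$: $\lambda^C(1|0)=1-\lim_{t\to0^+}[C_{2|1}(1-t|t)-C_{1|2}(t|1-t)]$.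 For $q=0$, $p=1$: $\lambda^C(0|1)=1-\lim_{t\to0^+}[C_{1|2}(1-t|t)-C_{2|1}(t|1-t)]$.
   Context: A copula is a bivariate distribution function on $[0,1]^2$ with uniform$(0,1)$ margins. For a copula $C$ and $p,q\in[0,1]$, the $(p,q)$-quantile dependence coefficient is $\lambda^C(q|p)=\lim_{t\to0^+}\frac{V_C([(p-t)^+,(p+t)^-]\times[(q-t)^+,(q+t)^-])}{(p+t)^- - (p-t)^+}$ when the limit exists, where $a^+=\max(a,0)$, $a^-=1-(1-a)^+$, and $V_C([u_1,u_2]\times[v_1,v_2])=C(u_2,v_2)-C(u_2,v_1)-C(u_1,v_2)+C(u_1,v_1)$. *)

(* Defs.v *)
From Stdlib Require Import Reals.
From Coquelicot Require Import Coquelicot.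
Open Scope R_scope.

Definition posp (a : R) : R := Rmax a 0.
Definition negm (a : R) : R := 1 - posp (1 - a).

Definition in01 (x : R) : Prop := 0 <= x <= 1.

Definition VC (C : R -> R -> R) (u1 u2 v1 v2 : R) : R :=
  C u2 v2 - C u2 v1 - C u1 v2 + C u1 v1.

(* A copula: a function on [0,1]^2 (values outside are irrelevant),
   grounded, with uniform margins, and 2-increasing. *)
Definition is_copula (C : R -> R -> R) : Prop :=
  (forall u, in01 u -> C u 0 = 0 /\ C 0 u = 0 /\ C u 1 = u /\ C 1 u = u) /\
  (forall u1 u2 v1 v2, in01 u1 -> in01 u2 -> in01 v1 -> in01 v2 ->
     u1 <= u2 -> v1 <= v2 -> 0 <= VC C u1 u2 v1 v2).

Definition C21 (C : R -> R -> R) (v u : R) : R := Derive (fun x => C x v) u.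
Definition C12 (C : R -> R -> R) (u v : R) : R := Derive (fun y => C u y) v.
Definition ex_C21 (C : R -> R -> R) (v u : R) : Prop := ex_derive (fun x => C x v) u.
Definition ex_C12 (C : R -> R -> R) (u v : R) : Prop := ex_derive (fun y => C u y) v.

(* The ratio whose limit as t -> 0+ defines lambda^C(q|p) *)
Definition lam_ratio (C : R -> R -> R) (p q t : R) : R :=
  VC C (posp (p - t)) (negm (p + t)) (posp (q - t)) (negm (q + t))
  / (negm (p + t) - posp (p - t)).

Definition qdc_is (C : R -> R -> R) (p q l : R) : Prop :=
  filterlim (lam_ratio C p q) (at_right 0) (locally l).

Definition lim0r (f : R -> R) (l : R) : Prop :=
  filterlim f (at_right 0) (locally l).

Definition near0r (P : R -> Prop) : Prop :=
  exists d, 0 < d /\ forall t, 0 < t < d -> P t.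

(* Main.v *)
Require Import Defs.
From Stdlib Require Import Reals Lra Classical.
From Coquelicot Require Import Coquelicot.
Open Scope R_scope.
Lemma le_eps (x y c : R) : 0 <= c -> (forall e, 0 < e -> x <= y + e * c) -> x <= y.
Proof.
  intros Hc H. destruct (Rle_dec x y) as [|Hn]; auto.
  destruct (Req_dec c 0) as [->|Hc0].
  - specialize (H 1 Rlt_0_1). lra.
  - assert (0 < c) by lra. specialize (H ((x - y) / (2 * c))).
    assert (0 < (x - y) / (2*c)) by (apply Rdiv_lt_0_compat; lra).
    specialize (H H1). replace ((x - y) / (2 * c) * c) with ((x - y)/2) in H by (field; lra). lra.
Qed.

Lemma dini_low (g : R -> R) (K m a b : R) :
  a < b -> 0 <= K ->
  (forall x y, a <= x <= b -> a <= y <= b -> Rabs (g x - g y) <= K * Rabs (x - y)) ->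
  (forall x, a <= x < b -> forall e, 0 < e -> exists eta, 0 < eta /\
      forall h, 0 < h < eta -> (m - e) * h <= g (x+h) - g x) ->
  m * (b - a) <= g b - g a.
Proof.
  intros Hab HK HL HD.
  assert (Main : forall e, 0 < e -> (m - e) * (b - a) <= g b - g a).
  { intros e He.
    set (psi := fun x => g x - g a - (m - e) * (x - a)).
    set (E := fun x => a <= x <= b /\ forall y, a <= y <= x -> 0 <= psi y).
    assert (Ea : E a).
    { split; [lra|]. intros y Hy. assert (y = a) by lra. subst y. unfold psi. lra. }
    assert (Eb : bound E) by (exists b; intros x [Hx _]; lra).
    destruct (completeness E Eb (ex_intro _ a Ea)) as [s [Hs1 Hs2]].
    assert (Has : a <= s) by (apply Hs1; auto).
    assert (Hsb : s <= b) by (apply Hs2; intros x [Hx _]; lra).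
    assert (C1 : forall y, a <= y < s -> 0 <= psi y).
    { intros y Hy. destruct (classic (exists x, E x /\ y < x)) as [[x [[_ Hx] Hyx]]|Hn].
      - apply Hx; lra.
      - exfalso. assert (s <= y). { apply Hs2. intros x Ex. destruct (Rle_dec x y); auto.
          exfalso; apply Hn; exists x; split; auto; lra. } lra. }
    assert (Lpsi : forall x y, a <= x <= b -> a <= y <= b ->
        Rabs (psi x - psi y) <= (K + Rabs (m - e)) * Rabs (x - y)).
    { intros x y Hx Hy. unfold psi.
      replace (g x - g a - (m - e) * (x - a) - (g y - g a - (m - e) * (y - a)))
        with ((g x - g y) + (- ((m - e) * (x - y)))) by ring.
      eapply Rle_trans; [apply Rabs_triang|]. rewrite Rabs_Ropp, Rabs_mult.
      specialize (HL x y Hx Hy). lra. }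
    assert (C2 : 0 <= psi s).
    { destruct (Req_dec s a) as [->|Hsa].
      - unfold psi; lra.
      - destruct (Rle_dec 0 (psi s)) as [|Hn]; auto. exfalso.
        set (z := - psi s). set (K' := K + Rabs (m - e)).
        assert (HK' : 0 <= K') by (unfold K'; pose proof (Rabs_pos (m-e)); lra).
        set (w := Rmin (s - a) (z / (K' + 1)) / 2).
        assert (Hw1 : 0 < Rmin (s - a) (z / (K' + 1))).
        { apply Rmin_glb_lt. lra. apply Rdiv_lt_0_compat; unfold z; lra. }
        assert (Hw2 : Rmin (s - a) (z / (K' + 1)) <= s - a) by apply Rmin_l.
        assert (Hw3 : Rmin (s - a) (z / (K' + 1)) <= z / (K' + 1)) by apply Rmin_r.
        assert (Hy : a <= s - w < s) by (unfold w; lra).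
        pose proof (C1 _ Hy) as P1.
        pose proof (Lpsi s (s - w) ltac:(lra) ltac:(lra)) as P2.
        replace (s - (s - w)) with w in P2 by ring.
        rewrite (Rabs_pos_eq w) in P2 by (unfold w; lra).
        assert (K' * w <= z / 2).
        { set (r := z / (K' + 1)) in *.
          assert (Hr : r * (K' + 1) = z) by (unfold r; field; lra).
          assert (0 < r) by (unfold r; apply Rdiv_lt_0_compat; unfold z; lra).
          assert (w <= r / 2) by (unfold w; lra).
          assert (0 <= w) by (unfold w; lra). nra. }
        pose proof (Rle_abs (psi (s - w) - psi s)) as P3.
        rewrite Rabs_minus_sym in P3. unfold K' in *. unfold z in *. lra. }
    assert (Hsb' : s = b).
    { destruct (Rle_lt_or_eq_dec s b Hsb) as [Hlt|]; auto. exfalso.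
      destruct (HD s (conj Has Hlt) e He) as [eta [Heta Hh]].
      set (h0 := Rmin (eta / 2) (b - s)).
      assert (0 < h0) by (apply Rmin_glb_lt; lra).
      assert (h0 <= eta / 2) by apply Rmin_l.
      assert (h0 <= b - s) by apply Rmin_r.
      assert (E (s + h0)).
      { split; [lra|]. intros y Hy.
        destruct (Rtotal_order y s) as [Hl|[He'|Hg]].
        - apply C1; lra.
        - subst; auto.
        - specialize (Hh (y - s) ltac:(lra)). replace (s + (y - s)) with y in Hh by ring.
          unfold psi in *. nra. }
      specialize (Hs1 _ H2). lra. }
    subst s. unfold psi in C2. lra.
  }
  apply (le_eps _ _ (b - a)); [lra|]. intros e He. specialize (Main e He). lra.
Qed.

Lemma dini_up (g : R -> R) (K M a b : R) :
  a < b -> 0 <= K ->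
  (forall x y, a <= x <= b -> a <= y <= b -> Rabs (g x - g y) <= K * Rabs (x - y)) ->
  (forall x, a < x <= b -> forall e, 0 < e -> exists eta, 0 < eta /\
      forall h, 0 < h < eta -> g x - g (x - h) <= (M + e) * h) ->
  g b - g a <= M * (b - a).
Proof.
  intros Hab HK HL HD.
  pose proof (dini_low (fun y => g (- y)) K (- M) (- b) (- a)) as P.
  simpl in P. rewrite !Ropp_involutive in P.
  enough (- M * (- a - - b) <= g a - g b) by lra.
  apply P; [lra|auto| |].
  - intros x y Hx Hy. replace (x - y) with (- (- x - - y)) by ring. rewrite Rabs_Ropp.
    apply HL; lra.
  - intros x Hx e He. destruct (HD (- x) ltac:(lra) e He) as [eta [Heta Hh]].
    exists eta; split; auto. intros h Hh'. specialize (Hh h Hh').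
    replace (- (x + h)) with (- x - h) by ring. lra.
Qed.

Lemma cop_lip_u C (HC : is_copula C) u1 u2 v :
  in01 u1 -> in01 u2 -> in01 v -> Rabs (C u1 v - C u2 v) <= Rabs (u1 - u2).
Proof.
  destruct HC as [Hb Hv]. intros H1 H2 H3.
  assert (K : forall x y, in01 x -> in01 y -> x <= y -> 0 <= C y v - C x v <= y - x).
  { intros x y Hx Hy Hxy.
    assert (i0 : in01 0) by (unfold in01; lra). assert (i1 : in01 1) by (unfold in01; lra).
    pose proof (Hv x y 0 v Hx Hy i0 H3 Hxy (proj1 H3)) as A.
    pose proof (Hv x y v 1 Hx Hy H3 i1 Hxy (proj2 H3)) as B.
    unfold VC in *. destruct (Hb x Hx) as [? [? [? ?]]]. destruct (Hb y Hy) as [? [? [? ?]]].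
    lra. }
  destruct (Rle_dec u1 u2).
  - specialize (K u1 u2 H1 H2 r). rewrite Rabs_left1 by lra. rewrite Rabs_left1 by lra. lra.
  - specialize (K u2 u1 H2 H1 ltac:(lra)). rewrite Rabs_pos_eq by lra. rewrite Rabs_pos_eq by lra. lra.
Qed.

Lemma cop_lip_v C (HC : is_copula C) u v1 v2 :
  in01 u -> in01 v1 -> in01 v2 -> Rabs (C u v1 - C u v2) <= Rabs (v1 - v2).
Proof.
  destruct HC as [Hb Hv]. intros H1 H2 H3.
  assert (K : forall x y, in01 x -> in01 y -> x <= y -> 0 <= C u y - C u x <= y - x).
  { intros x y Hx Hy Hxy.
    assert (i0 : in01 0) by (unfold in01; lra). assert (i1 : in01 1) by (unfold in01; lra).
    pose proof (Hv 0 u x y i0 H1 Hx Hy (proj1 H1) Hxy) as A.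
    pose proof (Hv u 1 x y H1 i1 Hx Hy (proj2 H1) Hxy) as B.
    unfold VC in *. destruct (Hb x Hx) as [? [? [? ?]]]. destruct (Hb y Hy) as [? [? [? ?]]].
    lra. }
  destruct (Rle_dec v1 v2).
  - specialize (K v1 v2 H2 H3 r). rewrite Rabs_left1 by lra. rewrite Rabs_left1 by lra. lra.
  - specialize (K v2 v1 H3 H2 ltac:(lra)). rewrite Rabs_pos_eq by lra. rewrite Rabs_pos_eq by lra. lra.
Qed.

Lemma cop_lip C (HC : is_copula C) u1 u2 v1 v2 :
  in01 u1 -> in01 u2 -> in01 v1 -> in01 v2 ->
  Rabs (C u1 v1 - C u2 v2) <= Rabs (u1 - u2) + Rabs (v1 - v2).
Proof.
  intros. replace (C u1 v1 - C u2 v2) with ((C u1 v1 - C u2 v1) + (C u2 v1 - C u2 v2)) by ring.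
  eapply Rle_trans; [apply Rabs_triang|].
  pose proof (cop_lip_u C HC u1 u2 v1). pose proof (cop_lip_v C HC u2 v1 v2). intuition lra.
Qed.

Lemma deriv_approx (f : R -> R) (x : R) : ex_derive f x -> forall eps, 0 < eps -> exists eta, 0 < eta /\
  forall h, Rabs h < eta -> Rabs (f (x+h) - f x - h * Derive f x) <= eps * Rabs h.
Proof.
  intros Hd eps He. pose proof (Derive_correct f x Hd) as H.
  apply is_derive_Reals in H. destruct (H eps He) as [d Hd'].
  exists d; split; [apply cond_pos|]. intros h Hh.
  destruct (Req_dec h 0) as [->|Hn].
  - rewrite Rplus_0_r, Rabs_R0. replace (f x - f x - 0 * Derive f x) with 0 by ring.
    rewrite Rabs_R0; lra.
  - specialize (Hd' h Hn Hh).
    replace (f (x + h) - f x - h * Derive f x) with (h * ((f (x + h) - f x) / h - Derive f x))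
      by (field; auto).
    rewrite Rabs_mult. rewrite Rmult_comm. apply Rmult_le_compat_r; [apply Rabs_pos|lra].
Qed.

Lemma strip (F1 F2 : R -> R) (x be : R) : (be = 0 \/ be = 1) ->
  (be = 1 -> ex_derive F1 x /\ ex_derive F2 x) ->
  forall eps, 0 < eps -> exists eta, 0 < eta /\ forall h, Rabs h < eta ->
  Rabs ((F1 (x + be*h) - F1 x) - (F2 (x + be*h) - F2 x) - be*h*(Derive F1 x - Derive F2 x))
    <= eps * Rabs h.
Proof.
  intros [ -> | -> ] Hd eps He.
  - exists 1; split; [lra|]. intros h _. replace (x + 0 * h) with x by ring.
    replace (F1 x - F1 x - (F2 x - F2 x) - 0 * h * (Derive F1 x - Derive F2 x)) with 0 by ring.
    rewrite Rabs_R0. pose proof (Rabs_pos h). nra.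
  - destruct (Hd eq_refl) as [D1 D2].
    destruct (deriv_approx F1 x D1 (eps/2) ltac:(lra)) as [e1 [He1 H1]].
    destruct (deriv_approx F2 x D2 (eps/2) ltac:(lra)) as [e2 [He2 H2]].
    exists (Rmin e1 e2); split; [apply Rmin_glb_lt; auto|]. intros h Hh.
    assert (Rabs h < e1) by (eapply Rlt_le_trans; [apply Hh|apply Rmin_l]).
    assert (Rabs h < e2) by (eapply Rlt_le_trans; [apply Hh|apply Rmin_r]).
    specialize (H1 h H). specialize (H2 h H0). rewrite Rmult_1_l.
    replace (F1 (x + h) - F1 x - (F2 (x + h) - F2 x) - h * (Derive F1 x - Derive F2 x))
      with ((F1 (x + h) - F1 x - h * Derive F1 x) - (F2 (x + h) - F2 x - h * Derive F2 x)) by ring.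
    set (A := F1 (x + h) - F1 x - h * Derive F1 x) in *.
    set (B := F2 (x + h) - F2 x - h * Derive F2 x) in *.
    pose proof (Rabs_triang A (- B)) as T. rewrite Rabs_Ropp in T. unfold Rminus. lra.
Qed.
Lemma lim0r_iff f l : lim0r f l <-> forall e, 0 < e -> exists d, 0 < d /\ forall t, 0 < t < d -> Rabs (f t - l) < e.
Proof.
  unfold lim0r; rewrite filterlim_locally; split.
  - intros H e He. destruct (H (mkposreal e He)) as [d Hd].
    exists d; split; [apply cond_pos|]. intros t Ht.
    apply (Hd t). 2: lra.
    change (Rabs (t - 0) < d). rewrite Rminus_0_r, Rabs_pos_eq; lra.
  - intros H e. destruct (H e (cond_pos e)) as [d [Hd H2]].
    exists (mkposreal d Hd). intros t Ht Ht0. apply H2. split. lra.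
    change (Rabs (t - 0) < d) in Ht. rewrite Rminus_0_r, Rabs_pos_eq in Ht; lra.
Qed.

Lemma abs_le_b z r : Rabs z <= r -> - r <= z <= r.
Proof. unfold Rabs; destruct Rcase_abs; lra. Qed.

Definition rg C p q al be ga de t := VC C (p - al*t) (p + be*t) (q - ga*t) (q + de*t).
Definition Sg C p q al be ga de t :=
  be * (C21 C (q+de*t) (p+be*t) - C21 C (q-ga*t) (p+be*t)) +
  al * (C21 C (q+de*t) (p-al*t) - C21 C (q-ga*t) (p-al*t)) +
  de * (C12 C (p+be*t) (q+de*t) - C12 C (p-al*t) (q+de*t)) +
  ga * (C12 C (p+be*t) (q-ga*t) - C12 C (p-al*t) (q-ga*t)).

Definition dom_ok p q al be ga de d0 :=
  forall t, 0 <= t <= d0 -> in01 (p - al*t) /\ in01 (p + be*t) /\ in01 (q - ga*t) /\ in01 (q + de*t).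

Definition ders_ok C p q al be ga de t :=
  (be = 1 -> ex_C21 C (q+de*t) (p+be*t) /\ ex_C21 C (q-ga*t) (p+be*t)) /\
  (al = 1 -> ex_C21 C (q+de*t) (p-al*t) /\ ex_C21 C (q-ga*t) (p-al*t)) /\
  (de = 1 -> ex_C12 C (p+be*t) (q+de*t) /\ ex_C12 C (p-al*t) (q+de*t)) /\
  (ga = 1 -> ex_C12 C (p+be*t) (q-ga*t) /\ ex_C12 C (p-al*t) (q-ga*t)).

Definition coef k := k = 0 \/ k = 1.

Lemma coef_pos k : coef k -> 0 <= k <= 1.
Proof. intros [-> | ->]; lra. Qed.

Lemma dini_pt C (HC : is_copula C) p q al be ga de d0 x :
  coef al -> coef be -> coef ga -> coef de ->
  dom_ok p q al be ga de d0 -> 0 < x < d0 -> ders_ok C p q al be ga de x ->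
  forall e, 0 < e -> exists eta, 0 < eta /\ forall h, 0 < h < eta ->
    (Sg C p q al be ga de x - e) * h <= rg C p q al be ga de (x + h) - rg C p q al be ga de x /\
    rg C p q al be ga de x - rg C p q al be ga de (x - h) <= (Sg C p q al be ga de x + e) * h.
Proof.
  intros Hal Hbe Hga Hde Hdom Hx [DR [DL [DT DB]]] e He.
  destruct (strip (fun u => C u (q+de*x)) (fun u => C u (q-ga*x)) (p+be*x) be Hbe DR (e/4) ltac:(lra))
    as [eR [HeR SR]].
  destruct (strip (fun u => C u (q+de*x)) (fun u => C u (q-ga*x)) (p-al*x) al Hal DL (e/4) ltac:(lra))
    as [eL [HeL SL]].
  destruct (strip (fun y => C (p+be*x) y) (fun y => C (p-al*x) y) (q+de*x) de Hde DT (e/4) ltac:(lra))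
    as [eT [HeT ST]].
  destruct (strip (fun y => C (p+be*x) y) (fun y => C (p-al*x) y) (q-ga*x) ga Hga DB (e/4) ltac:(lra))
    as [eB [HeB SB]].
  set (eta := Rmin (Rmin (Rmin eR eL) (Rmin eT eB)) (Rmin (d0 - x) x)).
  assert (Heta : 0 < eta).
  { unfold eta. repeat apply Rmin_glb_lt; lra. }
  assert (E1 : eta <= eR /\ eta <= eL /\ eta <= eT /\ eta <= eB /\ eta <= d0 - x /\ eta <= x).
  { unfold eta. pose proof (Rmin_l eR eL). pose proof (Rmin_r eR eL).
    pose proof (Rmin_l eT eB). pose proof (Rmin_r eT eB).
    pose proof (Rmin_l (Rmin eR eL) (Rmin eT eB)). pose proof (Rmin_r (Rmin eR eL) (Rmin eT eB)).
    pose proof (Rmin_l (d0 - x) x). pose proof (Rmin_r (d0 - x) x).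
    pose proof (Rmin_l (Rmin (Rmin eR eL) (Rmin eT eB)) (Rmin (d0 - x) x)).
    pose proof (Rmin_r (Rmin (Rmin eR eL) (Rmin eT eB)) (Rmin (d0 - x) x)). lra. }
  exists eta; split; auto. intros h Hh.
  assert (Ah : Rabs h = h) by (apply Rabs_pos_eq; lra).
  assert (Amh : Rabs (- h) = h) by (rewrite Rabs_Ropp; auto).
  assert (Hhl : Rabs h < eR /\ Rabs h < eL /\ Rabs h < eT /\ Rabs h < eB) by (rewrite Ah; lra).
  assert (Hhl' : Rabs (-h) < eR /\ Rabs (-h) < eL /\ Rabs (-h) < eT /\ Rabs (-h) < eB) by (rewrite Amh; lra).
  destruct Hhl as [h1 [h2 [h3 h4]]]. destruct Hhl' as [h1' [h2' [h3' h4']]].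
  pose proof (abs_le_b _ _ (SR h h1)) as R1. pose proof (abs_le_b _ _ (SR (-h) h1')) as R2.
  pose proof (abs_le_b _ _ (SL h h2)) as L1. pose proof (abs_le_b _ _ (SL (-h) h2')) as L2.
  pose proof (abs_le_b _ _ (ST h h3)) as T1. pose proof (abs_le_b _ _ (ST (-h) h3')) as T2.
  pose proof (abs_le_b _ _ (SB h h4)) as B1. pose proof (abs_le_b _ _ (SB (-h) h4')) as B2.
  rewrite Ah in R1, L1, T1, B1. rewrite Amh in R2, L2, T2, B2.
  cbv beta in *.
  destruct (Hdom x ltac:(lra)) as [ia [ib [ic id]]].
  destruct (Hdom (x+h) ltac:(lra)) as [ia' [ib' [ic' id']]].
  destruct (Hdom (x-h) ltac:(lra)) as [ia'' [ib'' [ic'' id'']]].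
  destruct HC as [_ Hinc].
  apply coef_pos in Hal. apply coef_pos in Hbe. apply coef_pos in Hga. apply coef_pos in Hde.
  unfold rg, Sg, C21, C12.
  replace (p - al * (x + h)) with (p - al * x + al * - h) in * by ring.
  replace (p + be * (x + h)) with (p + be * x + be * h) in * by ring.
  replace (q - ga * (x + h)) with (q - ga * x + ga * - h) in * by ring.
  replace (q + de * (x + h)) with (q + de * x + de * h) in * by ring.
  replace (p - al * (x - h)) with (p - al * x + al * h) in * by ring.
  replace (p + be * (x - h)) with (p + be * x + be * - h) in * by ring.
  replace (q - ga * (x - h)) with (q - ga * x + ga * h) in * by ring.
  replace (q + de * (x - h)) with (q + de * x + de * - h) in * by ring.
  set (a := p - al * x) in *. set (b := p + be * x) in *.
  set (c := q - ga * x) in *. set (d := q + de * x) in *.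
  assert (0 <= al * h) by nra. assert (0 <= be * h) by nra.
  assert (0 <= ga * h) by nra. assert (0 <= de * h) by nra.
  replace (al * - h) with (- (al * h)) in * by ring.
  replace (be * - h) with (- (be * h)) in * by ring.
  replace (ga * - h) with (- (ga * h)) in * by ring.
  replace (de * - h) with (- (de * h)) in * by ring.
  split.
  -
    pose proof (Hinc b (b + be*h) d (d + de*h) ib ib' id id' ltac:(lra) ltac:(lra)) as K1.
    pose proof (Hinc (a + - (al*h)) a d (d + de*h) ia' ia id id' ltac:(lra) ltac:(lra)) as K2.
    pose proof (Hinc b (b + be*h) (c + - (ga*h)) c ib ib' ic' ic ltac:(lra) ltac:(lra)) as K3.
    pose proof (Hinc (a + - (al*h)) a (c + - (ga*h)) c ia' ia ic' ic ltac:(lra) ltac:(lra)) as K4.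
    unfold VC in *. lra.
  -
    pose proof (Hinc (b + - (be*h)) b (d + - (de*h)) d ib'' ib id'' id ltac:(lra) ltac:(lra)) as K1.
    pose proof (Hinc a (a + al*h) (d + - (de*h)) d ia ia'' id'' id ltac:(lra) ltac:(lra)) as K2.
    pose proof (Hinc (b + - (be*h)) b c (c + ga*h) ib'' ib ic ic'' ltac:(lra) ltac:(lra)) as K3.
    pose proof (Hinc a (a + al*h) c (c + ga*h) ia ia'' ic ic'' ltac:(lra) ltac:(lra)) as K4.
    unfold VC in *. lra.
Qed.

Lemma abs4 A B C D : Rabs (A - B - C + D) <= Rabs A + Rabs B + Rabs C + Rabs D.
Proof. unfold Rabs; repeat destruct Rcase_abs; lra. Qed.

Lemma coef_abs k z : coef k -> Rabs (k * z) <= Rabs z.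
Proof. intros [-> | ->]; [rewrite Rmult_0_l, Rabs_R0; apply Rabs_pos | rewrite Rmult_1_l; lra]. Qed.

Lemma rg_lip C (HC : is_copula C) p q al be ga de d0 :
  coef al -> coef be -> coef ga -> coef de -> dom_ok p q al be ga de d0 ->
  forall x y, 0 <= x <= d0 -> 0 <= y <= d0 ->
  Rabs (rg C p q al be ga de x - rg C p q al be ga de y) <= 8 * Rabs (x - y).
Proof.
  intros Hal Hbe Hga Hde Hdom x y Hx Hy.
  destruct (Hdom x Hx) as [ia [ib [ic id]]]. destruct (Hdom y Hy) as [ia' [ib' [ic' id']]].
  unfold rg, VC.
  replace (C (p + be * x) (q + de * x) - C (p + be * x) (q - ga * x) - C (p - al * x) (q + de * x) +
   C (p - al * x) (q - ga * x) -
   (C (p + be * y) (q + de * y) - C (p + be * y) (q - ga * y) - C (p - al * y) (q + de * y) +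
    C (p - al * y) (q - ga * y)))
  with ((C (p + be * x) (q + de * x) - C (p + be * y) (q + de * y))
       - (C (p + be * x) (q - ga * x) - C (p + be * y) (q - ga * y))
       - (C (p - al * x) (q + de * x) - C (p - al * y) (q + de * y))
       + (C (p - al * x) (q - ga * x) - C (p - al * y) (q - ga * y))) by ring.
  eapply Rle_trans; [apply abs4|].
  pose proof (cop_lip C HC _ _ _ _ ib ib' id id') as Q1.
  pose proof (cop_lip C HC _ _ _ _ ib ib' ic ic') as Q2.
  pose proof (cop_lip C HC _ _ _ _ ia ia' id id') as Q3.
  pose proof (cop_lip C HC _ _ _ _ ia ia' ic ic') as Q4.
  replace (p + be * x - (p + be * y)) with (be * (x - y)) in * by ring.
  replace (p - al * x - (p - al * y)) with (- (al * (x - y))) in * by ring.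
  replace (q + de * x - (q + de * y)) with (de * (x - y)) in * by ring.
  replace (q - ga * x - (q - ga * y)) with (- (ga * (x - y))) in * by ring.
  rewrite ?Rabs_Ropp in Q1, Q2, Q3, Q4. rewrite ?Rabs_Ropp in Q1, Q2, Q3, Q4.
  pose proof (coef_abs _ (x - y) Hal). pose proof (coef_abs _ (x - y) Hbe).
  pose proof (coef_abs _ (x - y) Hga). pose proof (coef_abs _ (x - y) Hde).
  pose proof (Rabs_Ropp (al * (x - y))). pose proof (Rabs_Ropp (ga * (x - y))). lra.
Qed.

Lemma rg0 C p q al be ga de : rg C p q al be ga de 0 = 0.
Proof. unfold rg, VC. rewrite !Rmult_0_r, !Rminus_0_r, !Rplus_0_r. ring. Qed.

Lemma squeeze0 (X lo hi t K : R) : 0 < t -> 0 <= K ->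
  (forall a, 0 < a < t -> lo * (t - a) - K * a <= X <= hi * (t - a) + K * a) ->
  lo * t <= X <= hi * t.
Proof.
  intros Ht HK H. split.
  - apply (le_eps _ _ (Rabs lo + K)); [pose proof (Rabs_pos lo); lra|].
    intros e He. set (a := Rmin e (t/2)).
    assert (0 < a) by (apply Rmin_glb_lt; lra).
    assert (a <= e) by apply Rmin_l. assert (a <= t/2) by apply Rmin_r.
    destruct (H a ltac:(lra)) as [Hq1 _].
    pose proof (Rle_abs lo). pose proof (Rle_abs (-lo)). rewrite Rabs_Ropp in *.
    assert (lo * a <= Rabs lo * a) by nra. assert (Rabs lo * a <= Rabs lo * e) by nra.
    assert (K * a <= K * e) by nra. nra.
  - apply (le_eps _ _ (Rabs hi + K)); [pose proof (Rabs_pos hi); lra|].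
    intros e He. set (a := Rmin e (t/2)).
    assert (0 < a) by (apply Rmin_glb_lt; lra).
    assert (a <= e) by apply Rmin_l. assert (a <= t/2) by apply Rmin_r.
    destruct (H a ltac:(lra)) as [_ Hq1].
    pose proof (Rle_abs hi). pose proof (Rle_abs (-hi)). rewrite Rabs_Ropp in *.
    assert (- hi * a <= Rabs hi * a) by nra. assert (Rabs hi * a <= Rabs hi * e) by nra.
    assert (K * a <= K * e) by nra. nra.
Qed.

Lemma generic C (HC : is_copula C) p q al be ga de d0 L :
  coef al -> coef be -> coef ga -> coef de -> 0 < d0 -> dom_ok p q al be ga de d0 ->
  (forall t, 0 < t < d0 -> ders_ok C p q al be ga de t) ->
  lim0r (Sg C p q al be ga de) L ->
  lim0r (fun t => rg C p q al be ga de t / t) L.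
Proof.
  intros Hal Hbe Hga Hde Hd0 Hdom Hders Hlim.
  rewrite lim0r_iff in *. intros eps Heps.
  destruct (Hlim (eps/2) ltac:(lra)) as [d1 [Hd1 HS]].
  exists (Rmin d1 d0); split; [apply Rmin_glb_lt; auto|].
  intros t Ht. pose proof (Rmin_l d1 d0). pose proof (Rmin_r d1 d0).
  set (g := rg C p q al be ga de).
  assert (Hb : (L - eps/2) * t <= g t <= (L + eps/2) * t).
  { apply (squeeze0 _ _ _ _ 8); [lra|lra|]. intros a Ha.
    assert (Ga : Rabs (g a) <= 8 * a).
    { pose proof (rg_lip C HC p q al be ga de d0 Hal Hbe Hga Hde Hdom a 0 ltac:(lra) ltac:(lra)) as Z.
      unfold g. rewrite rg0, Rminus_0_r, Rminus_0_r, (Rabs_pos_eq a) in Z by lra. auto. }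
    apply abs_le_b in Ga.
    assert (Lip : forall x y, a <= x <= t -> a <= y <= t -> Rabs (g x - g y) <= 8 * Rabs (x - y)).
    { intros x y Hx Hy. apply (rg_lip C HC p q al be ga de d0); auto; lra. }
    split.
    - enough ((L - eps/2) * (t - a) <= g t - g a) by lra.
      apply (dini_low g 8); [lra|lra|auto|].
      intros x Hx e He.
      destruct (dini_pt C HC p q al be ga de d0 x Hal Hbe Hga Hde Hdom ltac:(lra)
                  (Hders x ltac:(lra)) e He) as [eta [Heta Hh]].
      exists eta; split; auto. intros h Hh'. destruct (Hh h Hh') as [Q _].
      specialize (HS x ltac:(lra)). apply Rlt_le in HS. apply abs_le_b in HS.
      fold g in Q. nra.
    - enough (g t - g a <= (L + eps/2) * (t - a)) by lra.
      apply (dini_up g 8); [lra|lra|auto|].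
      intros x Hx e He.
      destruct (dini_pt C HC p q al be ga de d0 x Hal Hbe Hga Hde Hdom ltac:(lra)
                  (Hders x ltac:(lra)) e He) as [eta [Heta Hh]].
      exists eta; split; auto. intros h Hh'. destruct (Hh h Hh') as [_ Q].
      specialize (HS x ltac:(lra)). apply Rlt_le in HS. apply abs_le_b in HS.
      fold g in Q. nra. }
  assert (Hg : Rabs (g t / t - L) <= eps / 2).
  { replace (g t / t - L) with ((g t - L * t) / t) by (field; lra).
    unfold Rdiv. rewrite Rabs_mult, Rabs_inv, (Rabs_pos_eq t) by lra.
    apply Rmult_le_reg_r with t; [lra|]. rewrite Rmult_assoc, Rinv_l, Rmult_1_r by lra.
    unfold Rabs; destruct Rcase_abs; nra. }
  fold g. lra.
Qed.

Lemma lim_affine f g L A B : lim0r f L -> near0r (fun t => g t = A + B * f t) ->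
  lim0r g (A + B * L).
Proof.
  rewrite !lim0r_iff. intros H [d [Hd Hg]] e He.
  destruct (H (e / (Rabs B + 1))) as [d1 [Hd1 H1]].
  { apply Rdiv_lt_0_compat; [lra|pose proof (Rabs_pos B); lra]. }
  exists (Rmin d d1); split; [apply Rmin_glb_lt; auto|]. intros t Ht.
  pose proof (Rmin_l d d1). pose proof (Rmin_r d d1).
  rewrite Hg by lra. specialize (H1 t ltac:(lra)).
  replace (A + B * f t - (A + B * L)) with (B * (f t - L)) by ring.
  rewrite Rabs_mult. pose proof (Rabs_pos B). pose proof (Rabs_pos (f t - L)).
  apply Rle_lt_trans with ((Rabs B + 1) * Rabs (f t - L)). nra.
  apply Rmult_lt_reg_r with (/ (Rabs B + 1)). apply Rinv_0_lt_compat; lra.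
  replace ((Rabs B + 1) * Rabs (f t - L) * / (Rabs B + 1)) with (Rabs (f t - L)) by (field; lra).
  exact H1.
Qed.

Lemma lim_ext_loc f g L : lim0r f L -> near0r (fun t => g t = f t) -> lim0r g L.
Proof.
  intros H [d [Hd Hg]]. replace L with (0 + 1 * L) by ring. apply (lim_affine f); auto.
  exists d; split; auto. intros t Ht. rewrite Hg; auto; ring.
Qed.

Lemma generic2 C (HC : is_copula C) p q al be ga de d0 L :
  coef al -> coef be -> coef ga -> coef de -> 0 < d0 -> dom_ok p q al be ga de d0 ->
  (forall t, 0 < t < d0 -> ders_ok C p q al be ga de t) ->
  (forall t, 0 < t < d0 -> posp (p - t) = p - al * t /\ negm (p + t) = p + be * t /\
                            posp (q - t) = q - ga * t /\ negm (q + t) = q + de * t) ->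
  0 < al + be ->
  lim0r (Sg C p q al be ga de) L ->
  qdc_is C p q (L / (al + be)).
Proof.
  intros Hal Hbe Hga Hde Hd0 Hdom Hders Hedge Hk Hlim.
  pose proof (generic C HC p q al be ga de d0 L Hal Hbe Hga Hde Hd0 Hdom Hders Hlim) as G.
  replace (L / (al + be)) with (0 + / (al + be) * L) by (field; lra).
  unfold qdc_is. fold (lim0r (lam_ratio C p q) (0 + / (al + be) * L)).
  apply (lim_affine _ _ _ _ _ G). exists d0; split; auto. intros t Ht.
  destruct (Hedge t Ht) as [E1 [E2 [E3 E4]]].
  unfold lam_ratio. rewrite E1, E2, E3, E4. fold (rg C p q al be ga de t).
  replace (p + be * t - (p - al * t)) with ((al + be) * t) by ring.
  field. lra.
Qed.

Lemma posp_in p t : 0 <= t <= p -> posp (p - t) = p - 1 * t.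
Proof. intros. unfold posp. rewrite Rmax_left; lra. Qed.
Lemma posp_0 t : 0 <= t -> posp (0 - t) = 0 - 0 * t.
Proof. intros. unfold posp. rewrite Rmax_right; lra. Qed.
Lemma negm_in p t : p + t <= 1 -> negm (p + t) = p + 1 * t.
Proof. intros. unfold negm, posp. rewrite Rmax_left; lra. Qed.
Lemma negm_1 t : 0 <= t -> negm (1 + t) = 1 + 0 * t.
Proof. intros. unfold negm, posp. rewrite Rmax_right; lra. Qed.

Lemma loc_int (u : R) (P : R -> Prop) : 0 < u < 1 -> (forall y, 0 <= y <= 1 -> P y) -> locally u P.
Proof.
  intros Hu HP. assert (Hm : 0 < Rmin u (1 - u)) by (apply Rmin_glb_lt; lra).
  exists (mkposreal _ Hm). intros y Hy. apply HP.
  change (Rabs (y - u) < Rmin u (1 - u)) in Hy.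
  pose proof (Rmin_l u (1 - u)). pose proof (Rmin_r u (1 - u)).
  unfold Rabs in Hy; destruct Rcase_abs in Hy; lra.
Qed.

Lemma bd21_1 C (HC : is_copula C) u : 0 < u < 1 -> ex_C21 C 1 u /\ C21 C 1 u = 1.
Proof.
  intros Hu. assert (D : is_derive (fun x => C x 1) u 1).
  { apply is_derive_ext_loc with (fun x => x). 
    apply loc_int; auto. intros y Hy. destruct HC as [Hb _]. destruct (Hb y Hy) as [? [? [? ?]]]. auto.
    exact (is_derive_id (K:=R_AbsRing) _). }
  split. exists 1; auto. apply is_derive_unique; auto.
Qed.
Lemma bd21_0 C (HC : is_copula C) u : 0 < u < 1 -> ex_C21 C 0 u /\ C21 C 0 u = 0.
Proof.
  intros Hu. assert (D : is_derive (fun x => C x 0) u 0).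
  { apply is_derive_ext_loc with (fun x => 0). 
    apply loc_int; auto. intros y Hy. destruct HC as [Hb _]. destruct (Hb y Hy) as [? [? [? ?]]]. auto.
    apply (is_derive_const (K := R_AbsRing) (V := R_NormedModule)). }
  split. exists 0; auto. apply is_derive_unique; auto.
Qed.
Lemma bd12_1 C (HC : is_copula C) v : 0 < v < 1 -> ex_C12 C 1 v /\ C12 C 1 v = 1.
Proof.
  intros Hu. assert (D : is_derive (fun y => C 1 y) v 1).
  { apply is_derive_ext_loc with (fun x => x). 
    apply loc_int; auto. intros y Hy. destruct HC as [Hb _]. destruct (Hb y Hy) as [? [? [? ?]]]. auto.
    exact (is_derive_id (K:=R_AbsRing) _). }
  split. exists 1; auto. apply is_derive_unique; auto.
Qed.
Lemma bd12_0 C (HC : is_copula C) v : 0 < v < 1 -> ex_C12 C 0 v /\ C12 C 0 v = 0.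
Proof.
  intros Hu. assert (D : is_derive (fun y => C 0 y) v 0).
  { apply is_derive_ext_loc with (fun x => 0). 
    apply loc_int; auto. intros y Hy. destruct HC as [Hb _]. destruct (Hb y Hy) as [? [? [? ?]]]. auto.
    apply (is_derive_const (K := R_AbsRing) (V := R_NormedModule)). }
  split. exists 0; auto. apply is_derive_unique; auto.
Qed.

Lemma mk_d0 a b c d e : 0 < a -> 0 < b -> 0 < c -> 0 < d -> 0 < e ->
  exists d0, 0 < d0 /\ d0 < a /\ d0 < b /\ d0 < c /\ d0 < d /\ d0 < e.
Proof.
  intros. exists (Rmin (Rmin a b) (Rmin (Rmin c d) e) / 2).
  pose proof (Rmin_l a b). pose proof (Rmin_r a b). pose proof (Rmin_l c d). pose proof (Rmin_r c d).
  pose proof (Rmin_l (Rmin c d) e). pose proof (Rmin_r (Rmin c d) e).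
  pose proof (Rmin_l (Rmin a b) (Rmin (Rmin c d) e)). pose proof (Rmin_r (Rmin a b) (Rmin (Rmin c d) e)).
  assert (0 < Rmin (Rmin a b) (Rmin (Rmin c d) e)) by (repeat apply Rmin_glb_lt; auto).
  lra.
Qed.

Ltac coefs := unfold coef; (right; reflexivity) || (left; reflexivity).
Ltac simpl01 := rewrite ?Rmult_1_l, ?Rmult_0_l, ?Rminus_0_r, ?Rplus_0_r, ?Rplus_0_l.

Theorem corollary2 (C : R -> R -> R) (HC : is_copula C) :
  (* p, q in (0,1) *)
  (forall p q L, 0 < p < 1 -> 0 < q < 1 ->
     near0r (fun t =>
       ex_C21 C (q + t) (p + t) /\ ex_C21 C (q - t) (p + t) /\
       ex_C21 C (q + t) (p - t) /\ ex_C21 C (q - t) (p - t) /\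
       ex_C12 C (p + t) (q + t) /\ ex_C12 C (p - t) (q + t) /\
       ex_C12 C (p + t) (q - t) /\ ex_C12 C (p - t) (q - t)) ->
     lim0r (fun t =>
       C21 C (q + t) (p + t) - C21 C (q - t) (p + t)
       + C21 C (q + t) (p - t) - C21 C (q - t) (p - t)
       + C12 C (p + t) (q + t) - C12 C (p - t) (q + t)
       + C12 C (p + t) (q - t) - C12 C (p - t) (q - t)) L ->
     qdc_is C p q (L / 2)) /\
  (* p in (0,1), q = 0 *)
  (forall p L, 0 < p < 1 ->
     near0r (fun t =>
       ex_C21 C t (p + t) /\ ex_C21 C t (p - t) /\
       ex_C12 C (p + t) t /\ ex_C12 C (p - t) t) ->
     lim0r (fun t =>
       C21 C t (p + t) + C21 C t (p - t) + C12 C (p + t) t - C12 C (p - t) t) L ->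
     qdc_is C p 0 (L / 2)) /\
  (* p in (0,1), q = 1 *)
  (forall p L, 0 < p < 1 ->
     near0r (fun t =>
       ex_C21 C (1 - t) (p + t) /\ ex_C21 C (1 - t) (p - t) /\
       ex_C12 C (p + t) (1 - t) /\ ex_C12 C (p - t) (1 - t)) ->
     lim0r (fun t =>
       C21 C (1 - t) (p + t) + C21 C (1 - t) (p - t)
       - C12 C (p + t) (1 - t) + C12 C (p - t) (1 - t)) L ->
     qdc_is C p 1 (1 - L / 2)) /\
  (* p = 0, q in (0,1) *)
  (forall q L, 0 < q < 1 ->
     near0r (fun t =>
       ex_C21 C (q + t) t /\ ex_C21 C (q - t) t /\
       ex_C12 C t (q + t) /\ ex_C12 C t (q - t)) ->
     lim0r (fun t =>
       C21 C (q + t) t - C21 C (q - t) t + C12 C t (q + t) + C12 C t (q - t)) L ->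
     qdc_is C 0 q L) /\
  (* p = 1, q in (0,1) *)
  (forall q L, 0 < q < 1 ->
     near0r (fun t =>
       ex_C12 C (1 - t) (q + t) /\ ex_C12 C (1 - t) (q - t) /\
       ex_C21 C (q + t) (1 - t) /\ ex_C21 C (q - t) (1 - t)) ->
     lim0r (fun t =>
       C12 C (1 - t) (q + t) + C12 C (1 - t) (q - t)
       - C21 C (q + t) (1 - t) + C21 C (q - t) (1 - t)) L ->
     qdc_is C 1 q (2 - L)) /\
  (* p = 0, q = 1 *)
  (forall L,
     near0r (fun t => ex_C21 C (1 - t) t /\ ex_C12 C t (1 - t)) ->
     lim0r (fun t => C21 C (1 - t) t - C12 C t (1 - t)) L ->
     qdc_is C 0 1 (1 - L)) /\
  (* p = 1, q = 0 *)
  (forall L,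
     near0r (fun t => ex_C12 C (1 - t) t /\ ex_C21 C t (1 - t)) ->
     lim0r (fun t => C12 C (1 - t) t - C21 C t (1 - t)) L ->
     qdc_is C 1 0 (1 - L)).
Proof.
  split; [|split; [|split; [|split; [|split; [|split]]]]].
  -
    intros p q L Hp Hq [dd [Hdd Hder]] Hlim.
    destruct (mk_d0 dd p (1 - p) q (1 - q)) as [d0 [H0 [H1 [H2 [H3 [H4 H5]]]]]]; try lra.
    assert (HS : lim0r (Sg C p q 1 1 1 1) L).
    { eapply lim_ext_loc; [apply Hlim|]. exists d0; split; auto. intros t Ht.
      unfold Sg; simpl01. ring. }
    pose proof (generic2 C HC p q 1 1 1 1 d0 L) as G.
    replace (L / 2) with (L / (1 + 1)) by field. apply G; try coefs; auto; try lra.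
    + intros t Ht. unfold in01; lra.
    + intros t Ht. unfold ders_ok. simpl01. destruct (Hder t ltac:(lra)) as (? & ? & ? & ? & ? & ? & ? & ?).
      repeat split; auto.
    + intros t Ht. rewrite posp_in, negm_in, posp_in, negm_in by lra. auto.
  -
    intros p L Hp [dd [Hdd Hder]] Hlim.
    destruct (mk_d0 dd p (1 - p) 1 1) as [d0 [H0 [H1 [H2 [H3 [H4 H5]]]]]]; try lra.
    assert (HS : lim0r (Sg C p 0 1 1 0 1) L).
    { eapply lim_ext_loc; [apply Hlim|]. exists d0; split; auto. intros t Ht.
      unfold Sg; simpl01. rewrite (proj2 (bd21_0 C HC (p + t) ltac:(lra))).
      rewrite (proj2 (bd21_0 C HC (p - t) ltac:(lra))). ring. }
    pose proof (generic2 C HC p 0 1 1 0 1 d0 L) as G.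
    replace (L / 2) with (L / (1 + 1)) by field. apply G; try coefs; auto; try lra.
    + intros t Ht. unfold in01; lra.
    + intros t Ht. unfold ders_ok. simpl01. destruct (Hder t ltac:(lra)) as [? [? [? ?]]].
      pose proof (proj1 (bd21_0 C HC (p + t) ltac:(lra))).
      pose proof (proj1 (bd21_0 C HC (p - t) ltac:(lra))).
      repeat split; auto; intros; lra.
    + intros t Ht. rewrite posp_in, negm_in, posp_0, negm_in by lra. auto.
  -
    intros p L Hp [dd [Hdd Hder]] Hlim.
    destruct (mk_d0 dd p (1 - p) 1 1) as [d0 [H0 [H1 [H2 [H3 [H4 H5]]]]]]; try lra.
    assert (HS : lim0r (Sg C p 1 1 1 1 0) (2 + -1 * L)).
    { eapply lim_affine; [apply Hlim|]. exists d0; split; auto. intros t Ht.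
      unfold Sg; simpl01. rewrite (proj2 (bd21_1 C HC (p + t) ltac:(lra))).
      rewrite (proj2 (bd21_1 C HC (p - t) ltac:(lra))). ring. }
    pose proof (generic2 C HC p 1 1 1 1 0 d0 (2 + -1 * L) ltac:(coefs) ltac:(coefs) ltac:(coefs) ltac:(coefs) H0) as G.
    replace (1 - L / 2) with ((2 + -1 * L) / (1 + 1)) by field. apply G; auto; try lra.
    + intros t Ht. unfold in01; lra.
    + intros t Ht. unfold ders_ok. simpl01. destruct (Hder t ltac:(lra)) as [? [? [? ?]]].
      pose proof (proj1 (bd21_1 C HC (p + t) ltac:(lra))).
      pose proof (proj1 (bd21_1 C HC (p - t) ltac:(lra))).
      repeat split; auto; intros; lra.
    + intros t Ht. rewrite posp_in, negm_in, posp_in, negm_1 by lra. auto.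
  -
    intros q L Hq [dd [Hdd Hder]] Hlim.
    destruct (mk_d0 dd q (1 - q) 1 1) as [d0 [H0 [H1 [H2 [H3 [H4 H5]]]]]]; try lra.
    assert (HS : lim0r (Sg C 0 q 0 1 1 1) L).
    { eapply lim_ext_loc; [apply Hlim|]. exists d0; split; auto. intros t Ht.
      unfold Sg; simpl01. rewrite (proj2 (bd12_0 C HC (q + t) ltac:(lra))).
      rewrite (proj2 (bd12_0 C HC (q - t) ltac:(lra))). ring. }
    pose proof (generic2 C HC 0 q 0 1 1 1 d0 L ltac:(coefs) ltac:(coefs) ltac:(coefs) ltac:(coefs) H0) as G.
    assert (E : L / (0 + 1) = L) by field. rewrite E in G. apply G; auto; try lra.
    + intros t Ht. unfold in01; lra.
    + intros t Ht. unfold ders_ok. simpl01. destruct (Hder t ltac:(lra)) as [? [? [? ?]]].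
      pose proof (proj1 (bd12_0 C HC (q + t) ltac:(lra))).
      pose proof (proj1 (bd12_0 C HC (q - t) ltac:(lra))).
      repeat split; auto; intros; lra.
    + intros t Ht. rewrite posp_0, negm_in, posp_in, negm_in by lra. auto.
  -
    intros q L Hq [dd [Hdd Hder]] Hlim.
    destruct (mk_d0 dd q (1 - q) 1 1) as [d0 [H0 [H1 [H2 [H3 [H4 H5]]]]]]; try lra.
    assert (HS : lim0r (Sg C 1 q 1 0 1 1) (2 + -1 * L)).
    { eapply lim_affine; [apply Hlim|]. exists d0; split; auto. intros t Ht.
      unfold Sg; simpl01. rewrite (proj2 (bd12_1 C HC (q + t) ltac:(lra))).
      rewrite (proj2 (bd12_1 C HC (q - t) ltac:(lra))). ring. }
    pose proof (generic2 C HC 1 q 1 0 1 1 d0 (2 + -1 * L) ltac:(coefs) ltac:(coefs) ltac:(coefs) ltac:(coefs) H0) as G.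
    replace (2 - L) with ((2 + -1 * L) / (1 + 0)) by field. apply G; auto; try lra.
    + intros t Ht. unfold in01; lra.
    + intros t Ht. unfold ders_ok. simpl01. destruct (Hder t ltac:(lra)) as [? [? [? ?]]].
      pose proof (proj1 (bd12_1 C HC (q + t) ltac:(lra))).
      pose proof (proj1 (bd12_1 C HC (q - t) ltac:(lra))).
      repeat split; auto; intros; lra.
    + intros t Ht. rewrite posp_in, negm_1, posp_in, negm_in by lra. auto.
  -
    intros L [dd [Hdd Hder]] Hlim.
    destruct (mk_d0 dd 1 1 1 1) as [d0 [H0 [H1 [H2 [H3 [H4 H5]]]]]]; try lra.
    assert (HS : lim0r (Sg C 0 1 0 1 1 0) (1 + -1 * L)).
    { eapply lim_affine; [apply Hlim|]. exists d0; split; auto. intros t Ht.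
      unfold Sg; simpl01. rewrite (proj2 (bd21_1 C HC t ltac:(lra))).
      rewrite (proj2 (bd12_0 C HC (1 - t) ltac:(lra))). ring. }
    pose proof (generic2 C HC 0 1 0 1 1 0 d0 (1 + -1 * L) ltac:(coefs) ltac:(coefs) ltac:(coefs) ltac:(coefs) H0) as G.
    replace (1 - L) with ((1 + -1 * L) / (0 + 1)) by field. apply G; auto; try lra.
    + intros t Ht. unfold in01; lra.
    + intros t Ht. unfold ders_ok. simpl01. destruct (Hder t ltac:(lra)) as [? ?].
      pose proof (proj1 (bd21_1 C HC t ltac:(lra))).
      pose proof (proj1 (bd12_0 C HC (1 - t) ltac:(lra))).
      repeat split; auto; intros; lra.
    + intros t Ht. rewrite posp_0, negm_in, posp_in, negm_1 by lra. auto.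
  -
    intros L [dd [Hdd Hder]] Hlim.
    destruct (mk_d0 dd 1 1 1 1) as [d0 [H0 [H1 [H2 [H3 [H4 H5]]]]]]; try lra.
    assert (HS : lim0r (Sg C 1 0 1 0 0 1) (1 + -1 * L)).
    { eapply lim_affine; [apply Hlim|]. exists d0; split; auto. intros t Ht.
      unfold Sg; simpl01. rewrite (proj2 (bd21_0 C HC (1 - t) ltac:(lra))).
      rewrite (proj2 (bd12_1 C HC t ltac:(lra))). ring. }
    pose proof (generic2 C HC 1 0 1 0 0 1 d0 (1 + -1 * L) ltac:(coefs) ltac:(coefs) ltac:(coefs) ltac:(coefs) H0) as G.
    replace (1 - L) with ((1 + -1 * L) / (1 + 0)) by field. apply G; auto; try lra.
    + intros t Ht. unfold in01; lra.
    + intros t Ht. unfold ders_ok. simpl01. destruct (Hder t ltac:(lra)) as [? ?].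
      pose proof (proj1 (bd21_0 C HC (1 - t) ltac:(lra))).
      pose proof (proj1 (bd12_1 C HC t ltac:(lra))).
      repeat split; auto; intros; lra.
    + intros t Ht. rewrite posp_in, negm_1, posp_0, negm_in by lra. auto.
Qed.
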